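(* Let $(E,\mu)$ and $(F,\nu)$ be fuzzy Riesz spaces and $T:E\rightarrow F$ a fuzzy Riesz homomorphism. (1) If $B$ is a fuzzy ideal in $E$, then $T(B)$ is a fuzzy ideal in $T(E)$. (2) If $B_1$ and $B_2$ are fuzzy ideals in $E$, then $T(B_1\cap B_2)=T(B_1)\cap T(B_2)$.
   Context: A fuzzy order on a real vector space $E$ is a map $\mu:E\times E\to[0,1]$ with $\mu(x,x)=1$; $\mu(x,y)+\mu(y,x)>1$ implies $x=y$; and $\mu(x,z)\ge\sup_{y}\min(\mu(x,y),\mu(y,z))$. Write $x\le y$ for $\mu(x,y)>\frac12$; suprema/infima are taken with respect to this relation. $(E,\mu)$ is a fuzzy ordered linear space if $\mu(x_1,x_2)>\frac12$ implies $\mu(x_1,x_2)\le\mu(x_1+x,x_2+x)$ for all $x$ and $\mu(x_1,x_2)\le\mu(\alpha x_1,\alpha x_2)$ for all $\alpha>0$; it is a fuzzy Riesz space if $x\vee y=\sup\{x,y\}$ and $x\wedge y=\inf\{x,y\}$ exist for all $x,y$. $|x|=x\vee(-x)$. A fuzzy Riesz homomorphism is a linear map with $T(x\vee y)=Tx\vee Ty$; its range $T(E)$ is a fuzzy Riesz subspace of $F$ and is regarded as a fuzzy Riesz space with the restricted fuzzy order. A subset $A$ is fuzzy solid if $\mu(|x|,|y|)>\frac12$ and $y\in A$ imply $x\in A$; a fuzzy ideal is a fuzzy solid vector subspace. *)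

(* Defs.v *)
From HB Require Import structures.
From mathcomp Require Import all_boot all_order all_algebra.
From mathcomp Require Import classical_sets reals.
Set Implicit Arguments. Unset Strict Implicit. Unset Printing Implicit Defensive.
Import Order.TTheory GRing.Theory Num.Theory.
Local Open Scope ring_scope.
Local Open Scope classical_set_scope.

Section FuzzyRiesz.
Variable R : realType.

(* A fuzzy order on V: values in [0,1], reflexive (=1), antisymmetric,
   max-min transitive  mu x z >= sup_y min (mu x y) (mu y z), written
   equivalently as: mu x z is an upper bound of all min (mu x y) (mu y z). *)
Definition fuzzy_order (V : Type) (mu : V -> V -> R) : Prop :=
  [/\ (forall x y, 0 <= mu x y <= 1),
      (forall x, mu x x = 1),
      (forall x y, mu x y + mu y x > 1 -> x = y) &
      (forall x y z, Num.min (mu x y) (mu y z) <= mu x z)].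

Definition fle (V : Type) (mu : V -> V -> R) (x y : V) : Prop := mu x y > 2^-1.

Definition is_sup_in (V : Type) (S : set V) (mu : V -> V -> R) (A : set V) (s : V) :=
  [/\ S s, (forall a, A a -> fle mu a s) &
      (forall u, S u -> (forall a, A a -> fle mu a u) -> fle mu s u)].

Definition is_inf_in (V : Type) (S : set V) (mu : V -> V -> R) (A : set V) (s : V) :=
  [/\ S s, (forall a, A a -> fle mu s a) &
      (forall u, S u -> (forall a, A a -> fle mu u a) -> fle mu u s)].

Definition is_sup (V : Type) := @is_sup_in V setT.
Definition is_inf (V : Type) := @is_inf_in V setT.

Definition fuzzy_ordered_linear_space (V : lmodType R) (mu : V -> V -> R) : Prop :=
  [/\ fuzzy_order mu,
      (forall x1 x2 x, fle mu x1 x2 -> mu x1 x2 <= mu (x1 + x) (x2 + x)) &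
      (forall x1 x2 (a : R), 0 < a -> fle mu x1 x2 -> mu x1 x2 <= mu (a *: x1) (a *: x2))].

Definition fuzzy_riesz_space (V : lmodType R) (mu : V -> V -> R) : Prop :=
  [/\ fuzzy_ordered_linear_space mu,
      (forall x y : V, exists s, is_sup mu [set x; y] s) &
      (forall x y : V, exists s, is_inf mu [set x; y] s)].

(* T (x \/ y) = T x \/ T y, stated relationally: whenever s = x \/ y in E,
   T s = T x \/ T y in F. *)
Definition fuzzy_riesz_hom (E F : lmodType R) (mu : E -> E -> R) (nu : F -> F -> R)
  (T : {linear E -> F}) : Prop :=
  forall x y s, is_sup mu [set x; y] s -> is_sup nu [set T x; T y] (T s).

Definition is_abs_in (V : lmodType R) (S : set V) (mu : V -> V -> R) (x a : V) :=
  is_sup_in S mu [set x; - x] a.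

Definition fuzzy_ideal_in (V : lmodType R) (S : set V) (mu : V -> V -> R) (B : set V) :=
  [/\ B `<=` S,
      B 0,
      (forall x y, B x -> B y -> B (x + y)),
      (forall (c : R) x, B x -> B (c *: x)) &
      (forall x y a b, S x -> S y -> is_abs_in S mu x a -> is_abs_in S mu y b ->
          fle mu a b -> B y -> B x)].

Definition fuzzy_ideal (V : lmodType R) (mu : V -> V -> R) (B : set V) :=
  fuzzy_ideal_in setT mu B.

End FuzzyRiesz.

(* Main.v *)
Require Import Defs.
From HB Require Import structures.
From mathcomp Require Import all_boot all_order all_algebra.
From mathcomp Require Import classical_sets reals.
From mathcomp Require Import lra.
Set Implicit Arguments. Unset Strict Implicit.
Import Order.TTheory GRing.Theory Num.Theory.
Local Open Scope ring_scope.
Local Open Scope classical_set_scope.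

Lemma fle_trans (R : realType) (V : lmodType R) (mu : V -> V -> R) :
  fuzzy_ordered_linear_space mu -> forall x y z, fle mu x y -> fle mu y z -> fle mu x z.
Proof.
case=> [[_ _ _ Ht] _ _] x y z; rewrite /fle => h1 h2.
apply: lt_le_trans (Ht x y z); by rewrite lt_min h1 h2.
Qed.

Lemma fle_refl (R : realType) (V : lmodType R) (mu : V -> V -> R) :
  fuzzy_ordered_linear_space mu -> forall x, fle mu x x.
Proof. case=> [[_ Hr _ _] _ _] x; rewrite /fle Hr; lra. Qed.

Lemma fle_anti (R : realType) (V : lmodType R) (mu : V -> V -> R) :
  fuzzy_ordered_linear_space mu -> forall x y, fle mu x y -> fle mu y x -> x = y.
Proof. case=> [[_ _ Ha _] _ _] x y; rewrite /fle => h1 h2; apply: Ha; lra. Qed.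

Lemma fle_add (R : realType) (V : lmodType R) (mu : V -> V -> R) :
  fuzzy_ordered_linear_space mu -> forall x y z, fle mu x y -> fle mu (x + z) (y + z).
Proof. case=> [_ Hd _] x y z h; rewrite /fle; apply: lt_le_trans h (Hd _ _ _ h). Qed.

Lemma fle_scale (R : realType) (V : lmodType R) (mu : V -> V -> R) :
  fuzzy_ordered_linear_space mu -> forall (a : R) x y, 0 < a -> fle mu x y -> fle mu (a *: x) (a *: y).
Proof. case=> [_ _ Hs] a x y ha h; rewrite /fle; apply: lt_le_trans h (Hs _ _ _ ha h). Qed.

Lemma fle_shift (R : realType) (V : lmodType R) (mu : V -> V -> R) :
  fuzzy_ordered_linear_space mu -> forall x y x' y',
  fle mu x y -> y' - x' = y - x -> fle mu x' y'.
Proof.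
move=> H x y x' y' h e.
have := fle_add H (x' - x) h.
have -> : x + (x' - x) = x' by rewrite addrC subrK.
suff -> : y + (x' - x) = y' by [].
by rewrite -[y'](subrK x') e addrA addrAC.
Qed.

Lemma fle_opp (R : realType) (V : lmodType R) (mu : V -> V -> R) :
  fuzzy_ordered_linear_space mu -> forall x y, fle mu x y -> fle mu (- y) (- x).
Proof. move=> H x y h; apply: (fle_shift H h); by rewrite opprK addrC. Qed.

Lemma abs_ge0 (R : realType) (V : lmodType R) (mu : V -> V -> R) :
  fuzzy_ordered_linear_space mu -> forall x a, fle mu x a -> fle mu (- x) a -> fle mu 0 a.
Proof.
move=> H x a h1 h2.
have h3 : fle mu 0 (a + x) by apply: (fle_shift H h2); rewrite subr0 opprK.
have h4 : fle mu (a + x) (a + a) by apply: (fle_shift H h1); rewrite opprD addrA addrK.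
have := fle_scale H (a := 2^-1) _ (fle_trans H h3 h4).
rewrite scaler0 -mulr2n -scaler_nat.
have -> : (2^-1 : R) *: (2%:R *: a) = a.
  by rewrite scalerA mulVf ?scale1r // pnatr_eq0.
by apply; rewrite invr_gt0 ltr0n.
Qed.

Lemma in2l (T : Type) (a b : T) : [set a; b] a.
Proof. by left. Qed.
Lemma in2r (T : Type) (a b : T) : [set a; b] b.
Proof. by right. Qed.
Lemma in2E (T : Type) (a b x : T) : [set a; b] x -> x = a \/ x = b.
Proof. by []. Qed.

Lemma sup_le (R : realType) (V : lmodType R) (mu : V -> V -> R) a b s d :
  is_sup mu [set a; b] s -> fle mu a d -> fle mu b d -> fle mu s d.
Proof. case=> _ _ lub ha hb; apply: lub => // x [->|->] //. Qed.

Lemma sup_ge (R : realType) (V : lmodType R) (mu : V -> V -> R) a b s :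
  is_sup mu [set a; b] s -> fle mu a s /\ fle mu b s.
Proof. case=> _ ub _; split; apply: ub; [exact: in2l | exact: in2r]. Qed.

Lemma sup_eq_l (R : realType) (V : lmodType R) (mu : V -> V -> R) :
  fuzzy_ordered_linear_space mu -> forall a b s,
  is_sup mu [set a; b] s -> fle mu b a -> s = a.
Proof.
move=> H a b s hs hba; apply: (fle_anti H).
  exact: (sup_le hs (fle_refl H a) hba).
exact: (sup_ge hs).1.
Qed.

Lemma sup_eq_r (R : realType) (V : lmodType R) (mu : V -> V -> R) :
  fuzzy_ordered_linear_space mu -> forall a b s,
  is_sup mu [set a; b] s -> fle mu a b -> s = b.
Proof.
move=> H a b s hs hba; apply: (fle_anti H).
  exact: (sup_le hs hba (fle_refl H b)).
exact: (sup_ge hs).2.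
Qed.

Lemma lb_z (R : realType) (V : lmodType R) (mu : V -> V -> R) :
  fuzzy_ordered_linear_space mu -> forall p c q x,
  is_sup mu [set p; c] q -> fle mu x p -> fle mu x c -> fle mu x (p + (c - q)).
Proof.
move=> H p c q x hq hp hc.
have : fle mu q (p + c - x).
  refine (sup_le hq _ _).
    apply: (fle_shift H hc).
    by rewrite [p + c]addrC addrAC addrK.
  apply: (fle_shift H hp).
  by rewrite addrAC addrK.
move=> h; apply: (fle_shift H h).
by rewrite addrA (addrAC (p + c)).
Qed.

Lemma ub_z (R : realType) (V : lmodType R) (mu : V -> V -> R) :
  fuzzy_ordered_linear_space mu -> forall p c q,
  fle mu p q -> fle mu (p + (c - q)) c.
Proof.
move=> H p c q h; apply: (fle_shift H h).
by rewrite opprD opprB addrCA (addrCA c) subrr addr0 addrC.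
Qed.

Lemma z_le_p (R : realType) (V : lmodType R) (mu : V -> V -> R) :
  fuzzy_ordered_linear_space mu -> forall p c q,
  fle mu c q -> fle mu (p + (c - q)) p.
Proof.
move=> H p c q h; apply: (fle_shift H h).
by rewrite opprD addrA subrr add0r opprB.
Qed.

Lemma clamp (R : realType) (E F : lmodType R)
  (mu : E -> E -> R) (nu : F -> F -> R) (T : {linear E -> F}) :
  fuzzy_riesz_space mu -> fuzzy_riesz_space nu -> fuzzy_riesz_hom mu nu T ->
  forall u c, fle mu 0 c -> fle nu (T u) (T c) -> fle nu (- T c) (T u) ->
  exists z, [/\ T z = T u, fle mu z c, fle mu (- c) z &
    (forall d, fle mu u d -> fle mu (- d) u -> fle mu 0 d ->
       fle mu z d /\ fle mu (- d) z)].
Proof.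
move=> [HE supE _] [HF _ _] Hom u c c0 h1 h2.
have nc0 : fle mu (- c) 0 by have := fle_opp HE c0; rewrite oppr0.
have ncc : fle mu (- c) c := fle_trans HE nc0 c0.
have [p hp] := supE u (- c).
have [q hq] := supE p c.
have [up cp] := sup_ge hp.
have [pq cq] := sup_ge hq.
exists (p + (c - q)); split.
- have Tp : T p = T u.
    have := Hom _ _ _ hp; rewrite raddfN => hTp.
    exact: (sup_eq_l HF hTp h2).
  have Tq : T q = T c.
    have hTq : is_sup nu [set T u; T c] (T q) by rewrite -Tp; exact: Hom _ _ _ hq.
    exact: (sup_eq_r HF hTq h1).
  have -> : T (p + (c - q)) = T p + (T c - T q) by rewrite raddfD raddfB.
  by rewrite Tp Tq subrr addr0.
- exact: (ub_z HE c pq).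
- exact: (lb_z HE hq cp ncc).
move=> d ud du d0.
have nd0 : fle mu (- d) 0 by have := fle_opp HE d0; rewrite oppr0.
split.
  apply: (fle_trans HE (z_le_p HE p cq)).
  refine (sup_le hp ud _).
  exact: (fle_trans HE nc0 d0).
apply: (lb_z HE hq (fle_trans HE du up)).
exact: (fle_trans HE nd0 c0).
Qed.

Lemma abs_le (R : realType) (V : lmodType R) (mu : V -> V -> R) :
  fuzzy_ordered_linear_space mu -> forall z a d,
  is_sup mu [set z; - z] a -> fle mu z d -> fle mu (- d) z -> fle mu a d.
Proof.
move=> H z a d ha h1 h2; refine (sup_le ha h1 _).
by have := fle_opp H h2; rewrite opprK.
Qed.

Lemma solid_B (R : realType) (V : lmodType R) (mu : V -> V -> R) (B : set V) :
  fuzzy_riesz_space mu -> fuzzy_ideal mu B -> forall w c z,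
  B w -> is_sup mu [set w; - w] c -> fle mu z c -> fle mu (- c) z -> B z.
Proof.
move=> [HE supE _]; rewrite /fuzzy_ideal => -[_ _ _ _ Bs] w c z Bw hc h1 h2.
have [a ha] := supE z (- z).
exact: (Bs z w a c I I ha hc (abs_le HE ha h1 h2) Bw).
Qed.

Theorem theorem2p4 (R : realType) (E F : lmodType R)
  (mu : E -> E -> R) (nu : F -> F -> R) (T : {linear E -> F}) :
  fuzzy_riesz_space mu -> fuzzy_riesz_space nu -> fuzzy_riesz_hom mu nu T ->
  (forall B : set E, fuzzy_ideal mu B -> fuzzy_ideal_in (range T) nu (T @` B)) /\
  (forall B1 B2 : set E, fuzzy_ideal mu B1 -> fuzzy_ideal mu B2 ->
     T @` (B1 `&` B2) = T @` B1 `&` T @` B2).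
Proof.
move=> rE rF Hom; have [HE supE _] := rE; have [HF _ _] := rF.
have absT : forall w c, is_sup mu [set w; - w] c ->
    [/\ fle mu 0 c, is_sup nu [set T w; - T w] (T c),
        fle nu (T w) (T c) & fle nu (- T w) (T c)].
  move=> w c hc.
  have [h1 h2] := sup_ge hc.
  have hT : is_sup nu [set T w; - T w] (T c).
    by have := Hom _ _ _ hc; rewrite raddfN.
  have [h3 h4] := sup_ge hT.
  by split => //; apply: (abs_ge0 HE h1 h2).
split.
  move=> B iB; have iB' := iB; move: iB'; rewrite /fuzzy_ideal.
  move=> -[_ B0 Badd Bscale _]; split.
  - by move=> _ [w _ <-]; exists w.
  - by exists 0 => //; rewrite raddf0.
  - move=> _ _ [x Bx <-] [y By <-]; exists (x + y); first exact: Badd.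
    by rewrite raddfD.
  - move=> k _ [x Bx <-]; exists (k *: x); first exact: Bscale.
    by rewrite linearZ.
  move=> x y a b [u _ <-] Sy [_ uba _] [_ _ lubb] hab [w Bw Tw].
  have [c hc] := supE w (- w).
  have [c0 hTc _ _] := absT w c hc.
  have hbc : fle nu b (T c).
    apply: lubb; first by exists c.
    by move=> t [->|->]; rewrite -Tw; [exact: (sup_ge hTc).1 | exact: (sup_ge hTc).2].
  have hu1 : fle nu (T u) (T c).
    apply: (fle_trans HF _ (fle_trans HF hab hbc)); apply: uba; exact: in2l.
  have hu2 : fle nu (- T c) (T u).
    have : fle nu (- T u) (T c).
      apply: (fle_trans HF _ (fle_trans HF hab hbc)); apply: uba; exact: in2r.
    by move/(fle_opp HF); rewrite opprK.
  have [z [Tz zc cz _]] := clamp rE rF Hom c0 hu1 hu2.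
  exists z => //; exact: (solid_B rE iB Bw hc zc cz).
move=> B1 B2 iB1 iB2; apply/seteqP; split.
  by move=> _ [x [h1 h2] <-]; split; exists x.
move=> _ [[u1 B1u1 <-] [u2 B2u2 e]].
have [c hc] := supE u2 (- u2).
have [c0 _ h1 h2] := absT u2 c hc.
have hu1 : fle nu (T u1) (T c) by rewrite -e.
have hu2 : fle nu (- T c) (T u1).
  by rewrite -e; have := fle_opp HF h2; rewrite opprK.
have [z [Tz zc cz zd]] := clamp rE rF Hom c0 hu1 hu2.
have [d hd] := supE u1 (- u1).
have [d0 _ _ _] := absT u1 d hd.
have [ud nud] := sup_ge hd.
have du : fle mu (- d) u1 by have := fle_opp HE nud; rewrite opprK.
have [zd1 zd2] := zd d ud du d0.
exists z => //; split.
  exact: (solid_B rE iB1 B1u1 hd zd1 zd2).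
exact: (solid_B rE iB2 B2u2 hc zc cz).
Qed.
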